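(* Let $A$, $Q$, $H\subseteq A^Q$ be non-empty finite sets and $\mathcal F$ a clone with carrier $A$ such that (a) $\mathcal F$ satisfies $\Delta^\partial$, or (b) $\mathcal F$ contains a $\partial$-function and $|H(q)|\le2$ for all $q\in Q$. Suppose $H\in\mathrm{Inv}_Q\mathcal F$ and let $P=\{p,q\}\in[Q]^2$. Then one of the following holds: (1) $H|_P=\{g\in A^P: g(p)\in H(p),\ g(q)\in H(q)\}$; (2) there is $\sigma\in S_A$ such that $H|_P=\{g\in A^P: g(p)\in H(p),\ g(q)\in H(q),\ g(q)=\sigma(g(p))\}$; (3) there are $a,b\in A$ such that $H|_P=\{g\in A^P: g(p)\in H(p),\ g(q)\in H(q),\ (g(p)=a\text{ or }g(q)=b)\}$.
   Context: $\mathcal O(A)=\bigcup_{n<\omega}A^{A^n}$. A clone with carrier $A$ is a subset of $\mathcal O(A)$ containing all projections and closed under composition. For $f\in\mathcal O(A)_{[n]}$ and $h_i\in A^Q$, $f(h_0,\dots,h_{n-1})$ is $q\mapsto f(h_0(q)\dots h_{n-1}(q))$; $\mathrm{Inv}_Q\mathcal F$ is the set of $H\subseteq A^Q$ closed under all such compositions with $f\in\mathcal F$. $H(q)=\{h(q):h\in H\}$; $H|_P=\{h|_P:h\in H\}$; $[Q]^2$ is the set of 2-element subsets of $Q$; $S_A$ the set of permutations of $A$; $A^3_3$ the set of triples in $A^3$ with three distinct entries, $\mathrm{ran}\,\mathbf a$ the set of entries of $\mathbf a$. A $\partial$-function is $\partial\in\mathcal O(A)_{[3]}$ with $\partial(xxy)=\partial(xyx)=\partial(yxx)=x$;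 $\mathcal F$ satisfies $\Delta^\partial$ if for all $\mathbf a\in A^3_3$ and $a\in\mathrm{ran}\,\mathbf a$ there is a $\partial$-function $\partial\in\mathcal F$ with $\partial(\mathbf a)=a$. *)

(* Defs.v *)
From mathcomp Require Import all_boot perm.
Set Implicit Arguments. Unset Strict Implicit. Unset Printing Implicit Defensive.

Definition op (A : finType) (n : nat) := {ffun {ffun 'I_n -> A} -> A}.

Definition is_clone (A : finType) (F : forall n, {set op A n}) : Prop :=
  (forall n (i : 'I_n), [ffun x : {ffun 'I_n -> A} => x i] \in F n) /\
  (forall n m (f : op A n) (g : 'I_n -> op A m),
      f \in F n -> (forall i, g i \in F m) ->
      [ffun x : {ffun 'I_m -> A} => f [ffun i => g i x]] \in F m).

Definition trip (A : finType) (x y z : A) : {ffun 'I_3 -> A} :=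
  [ffun i : 'I_3 => nth x [:: x; y; z] i].

Definition is_partial (A : finType) (d : op A 3) : Prop :=
  forall x y : A, d (trip x x y) = x /\ d (trip x y x) = x /\ d (trip y x x) = x.

Definition Delta_partial (A : finType) (F : forall n, {set op A n}) : Prop :=
  forall x y z : A, x != y -> y != z -> x != z ->
  forall a : A, a \in [:: x; y; z] ->
  exists2 d, d \in F 3 & is_partial d /\ d (trip x y z) = a.

Definition Inv (A Q : finType) (F : forall n, {set op A n})
  (H : {set {ffun Q -> A}}) : Prop :=
  forall n (f : op A n) (h : 'I_n -> {ffun Q -> A}),
    f \in F n -> (forall i, h i \in H) ->
    [ffun q => f [ffun i => h i q]] \in H.

Definition Hat (A Q : finType) (H : {set {ffun Q -> A}}) (q : Q) : {set A} :=
  [set (h : {ffun Q -> A}) q | h in H].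

(* H|_{p,q}, with a function g : {p,q} -> A encoded as the pair (g p, g q) *)
Definition restr2 (A Q : finType) (H : {set {ffun Q -> A}}) (p q : Q)
  : {set A * A} := [set ((h : {ffun Q -> A}) p, h q) | h in H].

(* Main.v *)
Require Import Defs.
From mathcomp Require Import all_boot perm.
Set Implicit Arguments. Unset Strict Implicit. Unset Printing Implicit Defensive.

Lemma ext_perm (A : finType) (X Y : {set A}) (f : A -> A) :
  {in X &, injective f} -> Y = f @: X ->
  exists sigma : {perm A}, {in X, forall x, sigma x = f x}.
Proof.
move=> finj defY.
have cXY : #|~: X| = #|~: Y|.
  have e1 := cardsC X; have e2 := cardsC Y.
  have : #|X| = #|Y| by rewrite defY card_in_imset.
  move=> e; rewrite e in e1; rewrite -e2 in e1; exact: (addnI e1).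
set cX := enum (~: X); set cY := enum (~: Y).
have szX : size cX = #|~: X| by rewrite cardE.
have szY : size cY = #|~: Y| by rewrite cardE.
pose g x := if x \in X then f x else nth x cY (index x cX).
have outX x : x \notin X -> index x cX < size cY.
  by move=> nx; rewrite szY -cXY -szX index_mem mem_enum inE.
have gout x : x \notin X -> g x \notin Y.
  move=> nx; rewrite /g (negbTE nx).
  have : nth x cY (index x cX) \in cY by apply: mem_nth; apply: outX.
  by rewrite mem_enum inE.
have fin x : x \in X -> f x \in Y by move=> Hx; rewrite defY imset_f.
have ginj : injective g.
  move=> x x'.
  case: (boolP (x \in X)) => Hx; case: (boolP (x' \in X)) => Hx'.
  - by rewrite /g Hx Hx'; apply: finj.
  - move=> e; have := gout _ Hx'; by rewrite -e /g Hx fin.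
  - move=> e; have := gout _ Hx; by rewrite e /g Hx' fin.
  - rewrite /g (negbTE Hx) (negbTE Hx') => e.
    have := outX _ Hx; have := outX _ Hx' => i1 i2.
    rewrite (set_nth_default x' x i2) in e.
    move/eqP: e; rewrite nth_uniq ?enum_uniq // => /eqP ei.
    have mx : x \in cX by rewrite mem_enum inE.
    have mx' : x' \in cX by rewrite mem_enum inE.
    by rewrite -(nth_index x mx) ei (nth_index x mx').
exists (perm ginj) => x Hx; by rewrite permE /g Hx.
Qed.

Lemma comb (A : finType) (R : {set A * A}) (X Y : {set A}) :
 (forall x y, (x,y) \in R -> (x \in X) && (y \in Y)) ->
 (forall x, x \in X -> exists y, (x,y) \in R) ->
 (forall y, y \in Y -> exists x, (x,y) \in R) ->
 (forall x y1 y2 y3, (x,y1)\in R -> (x,y2)\in R -> y1 != y2 -> y3 \in Y -> (x,y3)\in R) ->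
 (forall x1 x2 y x3, (x1,y)\in R -> (x2,y)\in R -> x1 != x2 -> x3 \in X -> (x3,y)\in R) ->
 let base := [set g : A * A | (g.1 \in X) && (g.2 \in Y)] in
 R = base \/ (exists sigma : {perm A}, R = [set g in base | g.2 == sigma g.1])
 \/ (exists a b : A, R = [set g in base | (g.1 == a) || (g.2 == b)]).
Proof.
move=> HR HX HY Hrow Hcol base.
have [ex|nex] := boolP [exists x0, exists y1, exists y2,
   [&& (x0,y1) \in R, (x0,y2) \in R & y1 != y2]].
- case/existsP: ex => x0 /existsP[y1 /existsP[y2 /and3P[H1 H2 Hne]]].
  have full0 y : y \in Y -> (x0,y) \in R by apply: Hrow H1 H2 Hne.
  have [ex1|nex1] := boolP [exists x1, exists y1, exists y2,
     [&& x1 != x0, (x1,y1) \in R, (x1,y2) \in R & y1 != y2]].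
  + case/existsP: ex1 => x1 /existsP[z1 /existsP[z2 /and4P[Hx H1' H2' Hne']]].
    have full1 y : y \in Y -> (x1,y) \in R by apply: Hrow H1' H2' Hne'.
    left; apply/setP => -[x y]; rewrite /base !inE /=; apply/idP/idP; first exact: HR.
    case/andP => Hx' Hy; apply: (Hcol x0 x1) => //; [exact: full0|exact: full1|by rewrite eq_sym].
  + have no1 x1 a b : x1 != x0 -> (x1,a) \in R -> (x1,b) \in R -> a = b.
      move=> ne ha hb; apply/eqP; apply: contraNT nex1 => nab.
      apply/existsP; exists x1; apply/existsP; exists a; apply/existsP; exists b.
      by rewrite ne ha hb.
    have [ex2|nex2] := boolP [exists x1 in X, x1 != x0].
    * case/existsP: ex2 => x1 /andP[Hx1 ne1].
      have [b Hb] := HX _ Hx1.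
      have Yb : b \in Y by case/andP: (HR _ _ Hb).
      have fullb x : x \in X -> (x,b) \in R.
        by move=> Hx; apply: (Hcol x0 x1) => //; [exact: full0|rewrite eq_sym].
      right; right; exists x0, b; apply/setP => -[x y]; rewrite /base !inE /=.
      apply/idP/idP.
      - move=> Hxy; have /andP[Hx Hy] := HR _ _ Hxy; rewrite Hx Hy /=.
        case: (eqVneq x x0) => //= nx.
        by rewrite (no1 x y b nx Hxy (fullb x Hx)) eqxx.
      - case/andP => /andP[Hx Hy] /orP[/eqP->|/eqP->]; [exact: full0|exact: fullb].
    * left; apply/setP => -[x y]; rewrite /base !inE /=; apply/idP/idP; first exact: HR.
      case/andP => Hx Hy; case: (eqVneq x x0) => [->|nx]; first exact: full0.
      by move/negP: nex2; case; apply/existsP; exists x; rewrite Hx nx.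
- have no1 x1 a b : (x1,a) \in R -> (x1,b) \in R -> a = b.
    move=> ha hb; apply/eqP; apply: contraNT nex => nab.
    apply/existsP; exists x1; apply/existsP; exists a; apply/existsP; exists b.
    by rewrite ha hb.
  have [exc|nexc] := boolP [exists x1, exists x2, exists y0,
     [&& (x1,y0) \in R, (x2,y0) \in R & x1 != x2]].
  + case/existsP: exc => x1 /existsP[x2 /existsP[y0 /and3P[H1 H2 Hne]]].
    have fullc x : x \in X -> (x,y0) \in R by apply: Hcol H1 H2 Hne.
    left; apply/setP => -[x y]; rewrite /base !inE /=; apply/idP/idP; first exact: HR.
    case/andP => Hx Hy; have [x' Hx'] := HY _ Hy.
    have Xx' : x' \in X by case/andP: (HR _ _ Hx').
    by rewrite (no1 _ _ _ Hx' (fullc _ Xx')); apply: fullc.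
  + have noc x1 x2 y : (x1,y) \in R -> (x2,y) \in R -> x1 = x2.
      move=> ha hb; apply/eqP; apply: contraNT nexc => nab.
      apply/existsP; exists x1; apply/existsP; exists x2; apply/existsP; exists y.
      by rewrite ha hb.
    pose f x := odflt x [pick y | (x,y) \in R].
    have fP x : x \in X -> (x, f x) \in R.
      move=> Hx; rewrite /f; case: pickP => [y //|none].
      by have [y Hy] := HX _ Hx; have := none y; rewrite Hy.
    have finj : {in X &, injective f}.
      move=> x x' Hx Hx' e; apply: (noc x x' (f x)) => //; first exact: fP.
      by rewrite e; apply: fP.
    have defY : Y = f @: X.
      apply/setP => y; apply/idP/imsetP.
      - move=> Hy; have [x Hxy] := HY _ Hy; have /andP[Hx _] := HR _ _ Hxy.
        by exists x => //; apply: no1 Hxy (fP _ Hx).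
      - by case=> x Hx ->; case/andP: (HR _ _ (fP _ Hx)).
    have [sigma Hs] := ext_perm finj defY.
    right; left; exists sigma; apply/setP => -[x y]; rewrite /base !inE /=.
    apply/idP/idP.
    * move=> Hxy; have /andP[Hx Hy] := HR _ _ Hxy.
      by rewrite Hx Hy Hs // (no1 _ _ _ Hxy (fP _ Hx)) eqxx.
    * by case/andP => /andP[Hx Hy] /eqP->; rewrite Hs //; apply: fP.
Qed.

Lemma closR (A Q : finType) (H : {set {ffun Q -> A}})
  (F : forall n, {set op A n}) (p q : Q) d x1 x2 x3 y1 y2 y3 :
  Inv F H -> d \in F 3 ->
  (x1,y1) \in restr2 H p q -> (x2,y2) \in restr2 H p q -> (x3,y3) \in restr2 H p q ->
  (d (trip x1 x2 x3), d (trip y1 y2 y3)) \in restr2 H p q.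
Proof.
move=> HI Hd /imsetP[h1 H1 [-> ->]] /imsetP[h2 H2 [-> ->]] /imsetP[h3 H3 [-> ->]].
pose h (i : 'I_3) := nth h1 [:: h1; h2; h3] i.
have hH i : h i \in H by case: i => [[|[|[|]]] ] //.
have := HI 3 d h Hd hH => Hm.
apply/imsetP; exists [ffun r => d [ffun i => h i r]] => //; rewrite !ffunE.
by congr pair; congr (d _); apply/ffunP => i; rewrite !ffunE; case: i => [[|[|[|]]] ].
Qed.

Theorem lemma2 (A Q : finType) (H : {set {ffun Q -> A}})
  (F : forall n, {set op A n}) (p q : Q) :
  0 < #|A| -> 0 < #|Q| -> H != set0 ->
  is_clone F ->
  (Delta_partial F \/
   ((exists2 d, d \in F 3 & is_partial d) /\ (forall r : Q, #|Hat H r| <= 2))) ->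
  Inv F H ->
  p != q ->
  let base := [set g : A * A | (g.1 \in Hat H p) && (g.2 \in Hat H q)] in
  restr2 H p q = base \/
  (exists sigma : {perm A},
      restr2 H p q = [set g in base | g.2 == sigma g.1]) \/
  (exists a b : A,
      restr2 H p q = [set g in base | (g.1 == a) || (g.2 == b)]).
Proof.
move=> _ _ _ _ Hcase HI _.
set R := restr2 H p q.
have HR x y : (x,y) \in R -> (x \in Hat H p) && (y \in Hat H q).
  by case/imsetP => h Hh [-> ->]; apply/andP; split; apply/imsetP; exists h.
have HX x : x \in Hat H p -> exists y, (x,y) \in R.
  by case/imsetP => h Hh ->; exists (h q); apply/imsetP; exists h.
have HY y : y \in Hat H q -> exists x, (x,y) \in R.
  by case/imsetP => h Hh ->; exists (h p); apply/imsetP; exists h.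
have three (S : {set A}) a b c : #|S| <= 2 -> a \in S -> b \in S -> c \in S ->
    a != b -> (c == a) || (c == b).
  move=> HS Ha Hb Hc ne; apply: contraT; rewrite negb_or => /andP[na nb].
  have : #|[set a; b; c]| <= #|S|.
    by apply: subset_leq_card; apply/subsetP => z; rewrite !inE => /orP[/orP[/eqP->|/eqP->]|/eqP->].
  rewrite setUC cardsU1 cards2 !inE negb_or na nb ne /=.
  by move=> le; have := leq_trans le HS.
apply: comb => //.
- move=> x y1 y2 y3 H1 H2 ne Hy3.
  have Y1 : y1 \in Hat H q by case/andP: (HR _ _ H1).
  have Y2 : y2 \in Hat H q by case/andP: (HR _ _ H2).
  have [x3 H3] := HY _ Hy3.
  case: (eqVneq y3 y1) => [->//|n1]; case: (eqVneq y3 y2) => [->//|n2].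
  case: Hcase => [HD|[_ Hle]]; last by have := three _ _ _ _ (Hle q) Y1 Y2 Hy3 ne; rewrite (negbTE n1) (negbTE n2).
  have n2' : y2 != y3 by rewrite eq_sym.
  have n1' : y1 != y3 by rewrite eq_sym.
  have mem : y3 \in [:: y1; y2; y3] by rewrite !inE eqxx !orbT.
  have [d Hd [Hp Hdv]] := HD y1 y2 y3 ne n2' n1' y3 mem.
  have := closR HI Hd H1 H2 H3.
  by rewrite Hdv (Hp x x3).1.
- move=> x1 x2 y x3 H1 H2 ne Hx3.
  have X1 : x1 \in Hat H p by case/andP: (HR _ _ H1).
  have X2 : x2 \in Hat H p by case/andP: (HR _ _ H2).
  have [y3 H3] := HX _ Hx3.
  case: (eqVneq x3 x1) => [->//|n1]; case: (eqVneq x3 x2) => [->//|n2].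
  case: Hcase => [HD|[_ Hle]]; last by have := three _ _ _ _ (Hle p) X1 X2 Hx3 ne; rewrite (negbTE n1) (negbTE n2).
  have n2' : x2 != x3 by rewrite eq_sym.
  have n1' : x1 != x3 by rewrite eq_sym.
  have mem : x3 \in [:: x1; x2; x3] by rewrite !inE eqxx !orbT.
  have [d Hd [Hp Hdv]] := HD x1 x2 x3 ne n2' n1' x3 mem.
  have := closR HI Hd H1 H2 H3.
  by rewrite Hdv (Hp y y3).1.
Qed.
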